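(* For every $n \geq 3$ and every $i \in \{1,\ldots,n\}$, the number of arrangements in $\{D_n\}$ whose first entry is $i$ is exactly $Der_{n-1}$.
   Context: A linear arrangement of $\{1,\ldots,n\}$ is a sequence $a_1\cdots a_n$ in which each of $1,\ldots,n$ appears exactly once. It contains the pattern $ij$ if $a_t=i$ and $a_{t+1}=j$ for some $t$; otherwise it avoids it. $\{D_n\}$ is the set of linear arrangements of $\{1,\ldots,n\}$ avoiding all of the patterns $12, 23, \ldots, (n-1)n, n1$. $Der_{m}$ is the number of permutations of $\{1,\ldots,m\}$ with no fixed point. *)

(* Defs.v *)
From mathcomp Require Import all_boot all_fingroup.
Set Implicit Arguments. Unset Strict Implicit. Unset Printing Implicit Defensive.

(* A linear arrangement a_1 ... a_n of {1,...,n} is encoded as a permutation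
   s : 'S_n, with a_{t+1} = (s t) + 1 for t : 'I_n (0-based positions and
   0-based values: value k : 'I_n stands for the number k+1). *)

Definition contains_pattern n (s : 'S_n) (i j : nat) : bool :=
  [exists t : 'I_n, (t.+1 < n) && (s t == i.-1 :> nat) &&
     [exists u : 'I_n, (val u == t.+1) && (s u == j.-1 :> nat)]].

(* The forbidden patterns 12, 23, ..., (n-1)n, n1. *)
Definition in_D n (s : 'S_n) : bool :=
  [forall k : 'I_n, ~~ contains_pattern s k.+1 (if k.+1 == n then 1 else k.+2)].

Definition Der (m : nat) : nat := #|[set s : 'S_m | [forall x, s x != x]]|.

(* Main.v *)
Require Import Defs.
From mathcomp Require Import all_boot all_fingroup zify.
Set Implicit Arguments. Unset Strict Implicit. Unset Printing Implicit Defensive.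

Lemma count_bij (T1 T2 : eqType) (s1 : seq T1) (s2 : seq T2) (P : pred T1) (Q : pred T2)
  (f : T1 -> T2) (g : T2 -> T1) :
  uniq s1 -> uniq s2 ->
  (forall x, x \in s1 -> P x -> [/\ f x \in s2, Q (f x) & g (f x) = x]) ->
  (forall y, y \in s2 -> Q y -> [/\ g y \in s1, P (g y) & f (g y) = y]) ->
  count P s1 = count Q s2.
Proof.
move=> u1 u2 H1 H2.
rewrite -!size_filter.
rewrite -(size_map f); apply: perm_size; apply: uniq_perm.
- rewrite map_inj_in_uniq ?filter_uniq // => x y; rewrite !mem_filter.
  move=> /andP[Px xs] /andP[Py ys] e.
  by case: (H1 x xs Px) => _ _ <-; case: (H1 y ys Py) => _ _ <-; rewrite e.
- exact: filter_uniq.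
move=> y; apply/mapP/idP.
- case=> x; rewrite mem_filter => /andP[Px xs] ->.
  by case: (H1 x xs Px) => a b _; rewrite mem_filter a b.
rewrite mem_filter => /andP[Qy ys].
case: (H2 y ys Qy) => a b c; exists (g y) => //.
by rewrite mem_filter a b.
Qed.

Fixpoint adj (x y : nat) (s : seq nat) : bool :=
  if s is a :: t then ((a == x) && (ohead t == Some y)) || adj x y t else false.
Definition succ x s := adj x x.+1 s.

Definition inc a y := if a < y then y.+1 else y.
Definition dec a y := if a.+1 < y then y.-1 else y.
Definition rl a x := if a < x then x.-1 else x.

Fixpoint ins a (s : seq nat) : seq nat :=
  if s is y :: t then (if y == a then y :: a.+1 :: t else y :: ins a t) else [::].
Definition ext a v := ins a (map (inc a) v).
Definition con a u := map (dec a) (filter (predC1 a.+1) u).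

Lemma adj_mem x y s : adj x y s -> x \in s.
Proof.
elim: s => //= b t IH /orP[/andP[/eqP-> _]|/IH]; first by rewrite mem_head.
by rewrite in_cons orbC => ->.
Qed.

Lemma adj_mem2 x y s : adj x y s -> y \in s.
Proof.
elim: s => //= b t IH /orP[/andP[_]|/IH]; last by rewrite in_cons orbC => ->.
by case: t {IH} => //= c t /eqP[->]; rewrite !in_cons eqxx orbT.
Qed.

Lemma inc_inj a : injective (inc a).
Proof. by move=> x y; rewrite /inc; case: ifP; case: ifP; lia. Qed.

Lemma adj_map f x y s : injective f -> adj (f x) (f y) (map f s) = adj x y s.
Proof.
move=> fi; elim: s => //= b t ->; rewrite (inj_eq fi); congr (_ && _ || _).
by case: t => //= c t; apply/eqP/eqP => [[/fi ->]|[->]].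
Qed.

Lemma ohead_ins a s : ohead (ins a s) = ohead s.
Proof. by case: s => //= y t; case: ifP. Qed.

Lemma adj_ins a p q s : p != a -> a.+1 \notin s -> uniq s ->
  adj p q (ins a s) = if p == a.+1 then adj a q s else adj p q s.
Proof.
move=> pa; elim: s => //= [|y t IH]; first by case: ifP.
rewrite in_cons negb_or => /andP[ya1 a1t] /andP[yt ut].
case: ifP => [/eqP ya|ya] /=.
  subst y; rewrite [a == p]eq_sym (negbTE pa) /=.
  case: ifP => [/eqP pa1|pa1].
    subst p; rewrite eqxx /=.
    have -> : adj a.+1 q t = false by apply/negP => /adj_mem; rewrite (negbTE a1t).
    have -> : adj a q t = false by apply/negP => /adj_mem; rewrite (negbTE yt).
    by rewrite !orbF.
  by rewrite eq_sym pa1.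
rewrite IH // ohead_ins; case: ifP => [/eqP pa1|//].
subst p; rewrite eq_sym (negbTE ya1) /=.
by [].
Qed.

Lemma adj_ins_a a s : a \in s -> adj a a.+1 (ins a s).
Proof.
elim: s => //= y t IH; rewrite in_cons; case: ifP => [/eqP->|ya] /=.
  by rewrite !eqxx.
by rewrite eq_sym ya /= => /IH.
Qed.

Lemma succ_ext a v x : x != a -> uniq v ->
  succ x (ext a v) = succ (rl a x) v.
Proof.
move=> xa uv; rewrite /succ /ext adj_ins //; last first.
- by rewrite map_inj_uniq //; exact: inc_inj.
- apply/mapP => -[y _]; rewrite /inc; case: ifP; lia.
case: ifP => [/eqP->|xa1].
  have -> : adj a a.+2 (map (inc a) v) = adj (inc a a) (inc a a.+1) (map (inc a) v) by rewrite /inc ltnn ltnSn.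
  rewrite adj_map /rl ?ltnSn //.
  exact: (@inc_inj a).
rewrite /rl; case: ifP => ax.
  have e1 : inc a x.-1 = x by rewrite /inc; case: ifP; lia.
  have e2 : inc a x = x.+1 by rewrite /inc; case: ifP; lia.
  rewrite -{1}e1 -e2 adj_map; last exact: (@inc_inj a).
  by have -> : x = x.-1.+1 by lia.
have e1 : inc a x = x by rewrite /inc; case: ifP; lia.
have e2 : inc a x.+1 = x.+1 by rewrite /inc; case: ifP; lia.
have -> : adj x x.+1 (map (inc a) v) = adj (inc a x) (inc a x.+1) (map (inc a) v) by rewrite e1 e2.
rewrite adj_map //; exact: (@inc_inj a).
Qed.

Lemma perm_iotaE (s : seq nat) k :
  perm_eq s (iota 0 k) = [&& uniq s, size s == k & all (fun y => y < k) s].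
Proof.
apply/idP/idP.
  move=> p; rewrite (perm_uniq p) (perm_size p) iota_uniq size_iota eqxx /=.
  by apply/allP => y; rewrite (perm_mem p) mem_iota.
case/and3P => us /eqP ss /allP al.
apply: uniq_perm => //; first exact: iota_uniq.
have [] := uniq_min_size us (s2 := iota 0 k).
- by move=> y /al; rewrite mem_iota.
- by rewrite size_iota ss.
by [].
Qed.

Lemma mem_ins a s y : y \in ins a s -> (y == a.+1) || (y \in s).
Proof.
elim: s => //= z t IH; case: ifP => _; rewrite !in_cons.
  by case/or3P => ->; rewrite ?orbT.
by case/orP => [->|/IH]; [rewrite orbT | case/orP => ->; rewrite ?orbT].
Qed.

Lemma uniq_ins a s : uniq s -> a.+1 \notin s -> uniq (ins a s).
Proof.
elim: s => //= z t IH /andP[zt ut]; rewrite in_cons negb_or => /andP[az a1t].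
case: ifP => [/eqP za|za] /=.
  by rewrite in_cons negb_or zt a1t ut andbT; subst z; rewrite eq_sym (negbTE az).
rewrite IH // andbT; apply/negP => /mem_ins /orP[/eqP zz|]; last by rewrite (negbTE zt).
by move: az; rewrite zz eqxx.
Qed.

Lemma size_ins a s : a \in s -> size (ins a s) = (size s).+1.
Proof.
elim: s => //= z t IH; rewrite in_cons; case: ifP => [_ _ //|za].
by rewrite eq_sym za /= => /IH ->.
Qed.

Lemma filter_ins a s : a.+1 \notin s -> filter (predC1 a.+1) (ins a s) = s.
Proof.
elim: s => //= z t IH; rewrite in_cons negb_or => /andP[az a1t].
have fz : (z != a.+1) = true by rewrite eq_sym.
case: ifP => _ /=; rewrite fz ?IH // eqxx /=; congr (_ :: _).
by apply/all_filterP/allP => y yt /=; apply: contraNneq a1t => <-.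
Qed.

Lemma dec_inc a y : dec a (inc a y) = y.
Proof. by rewrite /dec /inc; case: ifP; case: ifP => //; lia. Qed.

Lemma inc_dec a y : y != a.+1 -> inc a (dec a y) = y.
Proof. by rewrite /dec /inc; case: ifP; case: ifP => //; lia. Qed.

Lemma con_ext a v : con a (ext a v) = v.
Proof.
rewrite /con /ext filter_ins; first by rewrite -map_comp (eq_map (@dec_inc a)) map_id.
by apply/mapP => -[y _]; rewrite /inc; case: ifP; lia.
Qed.

Lemma ext_con a u : uniq u -> adj a a.+1 u -> ext a (con a u) = u.
Proof.
move=> uu au; rewrite /ext /con -map_comp.
have -> : map (inc a \o dec a) (filter (predC1 a.+1) u) = filter (predC1 a.+1) u.
  rewrite -[RHS]map_id; apply/eq_in_map => y.
  by rewrite mem_filter => /andP[/= ya _] /=; rewrite inc_dec.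
elim: u uu au => //= y t IH /andP[yt ut] /orP[/andP[/eqP ya]|ad].
  subst y; case: t yt ut {IH} => //= z t yt /andP[zt ut] /eqP[ez]; subst z.
  rewrite (_ : a != a.+1) ?eqxx /=; last by lia.
  rewrite eqxx; do 2 congr (_ :: _); apply/all_filterP/allP => w wt /=; apply: contraNneq zt => <-.
  by [].
have ya1 : y != a.+1 by apply: contraNneq yt => ->; exact: adj_mem2 ad.
have ya : y != a by apply: contraNneq yt => ->; exact: adj_mem ad.
by rewrite ya1 /= (negbTE ya) IH.
Qed.

Definition Wm m := [seq u <- permutations (iota 0 m.+1) | ohead u == Some 0].

Lemma WmP m u : (u \in Wm m) =
  [&& uniq u, size u == m.+1, all (fun y => y < m.+1) u & ohead u == Some 0].
Proof. by rewrite mem_filter mem_permutations perm_iotaE andbC -!andbA. Qed.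

Lemma ext_mem m a v : a <= m -> v \in Wm m -> ext a v \in Wm m.+1.
Proof.
move=> am; rewrite !WmP => /and4P[uv /eqP sv /allP av hv].
have a1 : a.+1 \notin map (inc a) v by apply/mapP => -[y _]; rewrite /inc; case: ifP; lia.
have av' : a \in map (inc a) v.
  have : perm_eq v (iota 0 m.+1) by rewrite perm_iotaE uv sv eqxx; exact/allP.
  move/perm_mem => pv; apply/mapP; exists a; first by rewrite pv mem_iota; lia.
  by rewrite /inc ltnn.
rewrite /ext uniq_ins ?map_inj_uniq //; last exact: inc_inj.
rewrite size_ins // size_map sv eqxx /=.
apply/andP; split.
  apply/allP => w /mem_ins /orP[/eqP->|/mapP[z zv ->]]; first by lia.
  by have := av z zv; rewrite /inc; case: ifP; lia.
rewrite ohead_ins; case: (v) hv => //= y t /eqP[->].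
by rewrite /inc ltn0.
Qed.

Lemma con_mem m a u : a <= m -> u \in Wm m.+1 -> adj a a.+1 u -> con a u \in Wm m.
Proof.
move=> am; rewrite !WmP => /and4P[uu /eqP su /allP au hu] ad.
have a1u : a.+1 \in u by exact: adj_mem2 ad.
rewrite /con map_inj_in_uniq ?filter_uniq //; last first.
  move=> x y; rewrite !mem_filter => /andP[/= xa _] /andP[/= ya _] e.
  by rewrite -(inc_dec xa) e inc_dec.
rewrite size_map size_filter.
have := count_predC (pred1 a.+1) u; rewrite su count_uniq_mem // a1u.
have e' : count (predC1 a.+1) u = count (predC (pred1 a.+1)) u by apply: eq_count.
rewrite e' => e; rewrite (_ : count (predC (pred1 a.+1)) u = m.+1) ?eqxx /=; last by move: e; rewrite /= add1n => -[].
apply/andP; split.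
  apply/allP => w /mapP[z]; rewrite mem_filter => /andP[/= za zu] ->.
  by have := au z zu; rewrite /dec; case: ifP; lia.
case: (u) hu => //= y t /eqP[->] /=.
by rewrite /dec.
Qed.

Definition noS T u := all (fun x => ~~ succ x u) T.

Lemma noS_ext a T v : a \notin T -> uniq v -> noS T (ext a v) = noS (map (rl a) T) v.
Proof.
move=> aT uv; rewrite /noS all_map; apply: eq_in_all => x xT /=.
by rewrite succ_ext //; apply: contraNneq aT => <-.
Qed.

Lemma Wm_uniq m : uniq (Wm m).
Proof. by rewrite filter_uniq // permutations_uniq. Qed.

Lemma Wm_a m a v : a <= m -> v \in Wm m -> a \in v.
Proof.
move=> am; rewrite mem_filter mem_permutations => /andP[_ /perm_mem ->].
by rewrite mem_iota; lia.
Qed.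

Lemma A_step m a T : a <= m -> a \notin T ->
  count (fun u => succ a u && noS T u) (Wm m.+1) = count (noS (map (rl a) T)) (Wm m).
Proof.
move=> am aT; apply: (@count_bij _ _ _ _ _ _ (con a) (ext a)); rewrite ?Wm_uniq //.
  move=> u uW /andP[sa nT].
  have cW := con_mem am uW sa.
  have uu : uniq (con a u) by move: cW; rewrite WmP => /and4P[].
  have ec : ext a (con a u) = u by apply: ext_con => //; move: uW; rewrite WmP => /and4P[].
  by split => //; rewrite -noS_ext // ec.
move=> v vW nT.
have uv : uniq v by move: vW; rewrite WmP => /and4P[].
split; [exact: ext_mem | | exact: con_ext].
rewrite noS_ext // nT andbT /succ /ext adj_ins_a //.
apply/mapP; exists a; first exact: Wm_a vW.
by rewrite /inc ltnn.
Qed.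

Definition fixd x (d : seq nat) := nth 0 d x == x.
Definition noF (T : seq nat) d := all (fun x => ~~ fixd x d) T.
Definition incP a y := if a <= y then y.+1 else y.
Definition extP a d := take a (map (incP a) d) ++ a :: drop a (map (incP a) d).
Definition conP a (d : seq nat) := map (rl a) (take a d ++ drop a.+1 d).
Definition Pm m := permutations (iota 0 m).

Lemma rl_incP a y : rl a (incP a y) = y.
Proof. by rewrite /rl /incP; case: ifP; case: ifP => //; lia. Qed.
Lemma incP_rl a y : y != a -> incP a (rl a y) = y.
Proof. by rewrite /rl /incP; case: ifP; case: ifP => //; lia. Qed.

Lemma size_extP a d : a <= size d -> size (extP a d) = (size d).+1.
Proof.
move=> ad; rewrite /extP size_cat /= size_take size_drop !size_map.
case: ifP; lia.
Qed.

Lemma nth_extP a d x : a <= size d -> x <= size d ->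
  nth 0 (extP a d) x =
  if x < a then incP a (nth 0 d x) else if x == a then a else incP a (nth 0 d x.-1).
Proof.
move=> ad xd; rewrite /extP nth_cat size_take size_map.
have -> : (if a < size d then a else size d) = a by case: ifP; lia.
case: ifP => xa.
  by rewrite nth_take // (nth_map 0) //; lia.
case: ifP => [/eqP->|xa']; first by rewrite subnn.
have xa2 : a < x by move/negbT: xa; move/negbT: xa'; lia.
have -> : x - a = (x - a).-1.+1 by lia.
rewrite /= nth_drop (nth_map 0); last by lia.
by have -> : a + (x - a).-1 = x.-1 by lia.
Qed.

Lemma fixd_extP a d x : a <= size d -> x <= size d -> x != a ->
  fixd x (extP a d) = fixd (rl a x) d.
Proof.
move=> ad xd xa; rewrite /fixd nth_extP // (negbTE xa) /rl.
case: ifP => xa'.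
  have -> : (a < x) = false by lia.
  by rewrite /incP; case: leqP => h; apply/eqP/eqP => e; lia.
have ax : a < x by lia.
by rewrite ax /incP; case: leqP => h; apply/eqP/eqP => e; lia.
Qed.

Lemma fixd_extP_a a d : a <= size d -> fixd a (extP a d).
Proof. by move=> ad; rewrite /fixd nth_extP // ltnn eqxx. Qed.

Lemma conP_extP a d : a <= size d -> conP a (extP a d) = d.
Proof.
move=> ad; rewrite /conP /extP.
have st : size (take a (map (incP a) d)) = a by rewrite size_take size_map; case: ifP; lia.
rewrite take_size_cat // -cat1s catA drop_size_cat; last by rewrite size_cat st addn1.
by rewrite cat_take_drop -map_comp (eq_map (@rl_incP a)) map_id.
Qed.

Lemma PmP m d : (d \in Pm m) = [&& uniq d, size d == m & all (fun y => y < m) d].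
Proof. by rewrite /Pm mem_permutations perm_iotaE. Qed.

Lemma extP_perm a d : perm_eq (extP a d) (a :: map (incP a) d).
Proof.
rewrite /extP; set s := map (incP a) d.
apply/seq.permP => p; have := count_cat p (take a s) (drop a s); rewrite cat_take_drop => e.
by rewrite count_cat /= e addnCA.
Qed.

Lemma extP_mem m a d : a <= m -> d \in Pm m -> extP a d \in Pm m.+1.
Proof.
move=> am; rewrite /Pm !mem_permutations => pd.
rewrite (perm_trans (extP_perm a d)) // perm_iotaE.
move: pd; rewrite perm_iotaE => /and3P[ud /eqP sd /allP ald].
rewrite /= size_map sd eqxx map_inj_uniq ?ud ?andbT /=; last first.
  by move=> x y; rewrite /incP; case: ifP; case: ifP; lia.
apply/andP; split.
  by apply/mapP => -[y _]; rewrite /incP; case: ifP; lia.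
apply/andP; split; first by lia.
by apply/allP => w /mapP[y /ald yd ->]; rewrite /incP; case: ifP; lia.
Qed.

Lemma take_drop_split a (d : seq nat) : a < size d -> fixd a d ->
  d = take a d ++ a :: drop a.+1 d.
Proof.
move=> ad /eqP fa; have := drop_nth 0 ad; rewrite fa => <-; by rewrite cat_take_drop.
Qed.

Lemma conP_mem m a d : a <= m -> d \in Pm m.+1 -> fixd a d -> conP a d \in Pm m.
Proof.
move=> am; rewrite /Pm !mem_permutations => pd fa.
have sd : size d = m.+1 by rewrite (perm_size pd) size_iota.
have ad : a < size d by rewrite sd; lia.
have e := take_drop_split ad fa.
set s := take a d ++ drop a.+1 d.
have ps : perm_eq (a :: s) (iota 0 m.+1).
  apply: perm_trans pd; rewrite [X in perm_eq _ X]e /s.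
  by apply/seq.permP => p; rewrite !count_cat /= addnCA count_cat.
move: ps; rewrite perm_iotaE /= => /and4P[/andP[aS us] /eqP ss _ /allP als].
case: ss => ss; rewrite perm_iotaE /conP -/s size_map ss eqxx /=.
apply/andP; split.
  rewrite map_inj_in_uniq // => x y xs ys ex.
  have xa : x != a by apply: contraNneq aS => <-.
  have ya : y != a by apply: contraNneq aS => <-.
  by rewrite -(incP_rl xa) ex incP_rl.
apply/allP => w /mapP[y ys ->].
have := als y ys; have : y != a by apply: contraNneq aS => <-.
by rewrite /rl; case: ifP; lia.
Qed.

Lemma extP_conP m a d : d \in Pm m.+1 -> a <= m -> fixd a d -> extP a (conP a d) = d.
Proof.
move=> dP am fa.
have sd : size d = m.+1 by move: dP; rewrite PmP => /and3P[_ /eqP].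
have ud : uniq d by move: dP; rewrite PmP => /and3P[].
have ad : a < size d by rewrite sd; lia.
have e := take_drop_split ad fa.
have aS : a \notin take a d ++ drop a.+1 d.
  have pe : perm_eq d (a :: (take a d ++ drop a.+1 d)).
    by rewrite [X in perm_eq X _]e; apply/seq.permP => p; rewrite !count_cat /= addnCA count_cat.
  by move: ud; rewrite (perm_uniq pe) /= => /andP[].
rewrite /extP /conP -map_comp.
have -> : map (incP a \o rl a) (take a d ++ drop a.+1 d) = take a d ++ drop a.+1 d.
  rewrite -[RHS]map_id; apply/eq_in_map => y ys /=; rewrite incP_rl //.
  by apply/eqP => ya; move: aS; rewrite -{1}ya ys.
have st : size (take a d) = a by rewrite size_take; case: ifP; lia.
by rewrite (take_size_cat _ st) (drop_size_cat _ st) -e.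
Qed.

Lemma noF_ext a T d : a \notin T -> all (fun x => x <= size d) T -> a <= size d ->
  noF T (extP a d) = noF (map (rl a) T) d.
Proof.
move=> aT /allP Tb ad; rewrite /noF all_map; apply: eq_in_all => x xT /=.
by rewrite fixd_extP //; [exact: Tb | apply: contraNneq aT => <-].
Qed.

Lemma Pm_uniq m : uniq (Pm m).
Proof. exact: permutations_uniq. Qed.

Lemma B_step m a T : a <= m -> a \notin T -> all (fun x => x < m.+1) T ->
  count (fun d => fixd a d && noF T d) (Pm m.+1) = count (noF (map (rl a) T)) (Pm m).
Proof.
move=> am aT Tb; apply: (@count_bij _ _ _ _ _ _ (conP a) (extP a)); rewrite ?Pm_uniq //.
  move=> d dP /andP[fa nT].
  have cP := conP_mem am dP fa.
  have sc : size (conP a d) = m by move: cP; rewrite PmP => /and3P[_ /eqP].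
  have ec := extP_conP dP am fa.
  by split => //; rewrite -noF_ext ?ec ?sc //.
move=> d dP nT.
have sd : size d = m by move: dP; rewrite PmP => /and3P[_ /eqP].
split; [exact: extP_mem | | by rewrite conP_extP ?sd].
by rewrite noF_ext ?sd // ?nT ?andbT; apply: fixd_extP_a; rewrite sd.
Qed.

Lemma count_split (T : Type) (p q : pred T) s :
  count (fun u => ~~ p u && q u) s + count (fun u => p u && q u) s = count q s.
Proof. by elim: s => //= x s IH; case: (p x); case: (q x) => /=; lia. Qed.

Lemma size_Wm m : size (Wm m) = m`!.
Proof.
rewrite /Wm size_filter.
have -> : m`! = count predT (permutations (iota 1 m)).
  by rewrite count_predT size_permutations ?iota_uniq // size_iota.
apply: (@count_bij _ _ _ _ _ _ behead (cons 0)); rewrite ?permutations_uniq //.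
  move=> u; rewrite !mem_permutations; case: u => //= y t pu /eqP[ey]; subst y.
  by split => //; move: pu; rewrite perm_cons.
by move=> v; rewrite !mem_permutations => pv _; split => //=; rewrite perm_cons.
Qed.

Lemma size_Pm m : size (Pm m) = m`!.
Proof. by rewrite /Pm size_permutations ?iota_uniq // size_iota. Qed.

Lemma AB m (T : seq nat) : uniq T -> all (fun x => x < m) T ->
  count (noS T) (Wm m) = count (noF T) (Pm m).
Proof.
elim: m T => [|m IHm] T.
  by case: T => //= x T _ /andP[].
elim: T => [|a T IHT].
  move=> _ _; rewrite (eq_count (a2 := predT)) // (eq_count (a1 := noF [::]) (a2 := predT)) //.
  by rewrite !count_predT size_Wm size_Pm.
move=> /= /andP[aT uT] /andP[am Tb].
have e1 := count_split (fun u => succ a u) (noS T) (Wm m.+1).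
have e2 := count_split (fun d => fixd a d) (noF T) (Pm m.+1).
have s1 := A_step (T := T) (_ : a <= m) aT.
have s2 := B_step (_ : a <= m) aT Tb.
have h := IHT uT Tb.
have h' : count (noS (map (rl a) T)) (Wm m) = count (noF (map (rl a) T)) (Pm m).
  apply: IHm.
    rewrite map_inj_in_uniq // => x y xT yT.
    have xa : x != a by apply: contraNneq aT => <-.
    have ya : y != a by apply: contraNneq aT => <-.
    by move=> e; rewrite -(incP_rl xa) e incP_rl.
  apply/allP => w /mapP[x xT ->].
  have xa : x != a by apply: contraNneq aT => <-.
  have := allP Tb x xT; rewrite /rl; case: ifP; lia.
rewrite (s1 _) ?(s2 _) in e1 e2; try lia.
have -> : count (noS (a :: T)) (Wm m.+1) = count (fun u => ~~ succ a u && noS T u) (Wm m.+1) by [].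
have -> : count (noF (a :: T)) (Pm m.+1) = count (fun u => ~~ fixd a u && noF T u) (Pm m.+1) by [].
lia.
Qed.

Lemma card_count (T : finType) (P : pred T) : #|[set x | P x]| = count P (enum T).
Proof.
rewrite cardsE cardE /enum_mem size_filter /enum_mem.
rewrite (eq_filter (a2 := predT)) // filter_predT.
by apply: eq_count.
Qed.

Lemma count_inj (T1 T2 : eqType) (s1 : seq T1) (s2 : seq T2) (P : pred T1) (Q : pred T2)
  (f : T1 -> T2) :
  uniq s1 -> uniq s2 ->
  (forall x y, x \in s1 -> P x -> y \in s1 -> P y -> f x = f y -> x = y) ->
  (forall x, x \in s1 -> P x -> (f x \in s2) && Q (f x)) ->
  (forall y, y \in s2 -> Q y -> exists2 x, (x \in s1) && P x & f x = y) ->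
  count P s1 = count Q s2.
Proof.
move=> u1 u2 fi H1 H2.
rewrite -!size_filter.
rewrite -(size_map f); apply: perm_size; apply: uniq_perm.
- rewrite map_inj_in_uniq ?filter_uniq // => x y; rewrite !mem_filter.
  by move=> /andP[Px xs] /andP[Py ys]; apply: fi.
- exact: filter_uniq.
move=> y; apply/mapP/idP.
- case=> x; rewrite mem_filter => /andP[Px xs] ->.
  by case/andP: (H1 x xs Px) => a b; rewrite mem_filter a b.
rewrite mem_filter => /andP[Qy ys].
case: (H2 y ys Qy) => x /andP[a b] c; exists x => //.
by rewrite mem_filter a b.
Qed.

Definition fs m (s : 'S_m) (x : nat) : nat :=
  if insub x is Some i then val (s i) else 0.
Definition wd m (s : 'S_m) := map (fs s) (iota 0 m).

Lemma fsE m (s : 'S_m) (i : 'I_m) : fs s i = val (s i).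
Proof. by rewrite /fs valK. Qed.

Lemma wdE m (s : 'S_m) : wd s = map (fun i => val (s i)) (enum 'I_m).
Proof. by rewrite /wd -val_enum_ord -map_comp; apply: eq_map => i /=; rewrite fsE. Qed.

Lemma nth_wd m (s : 'S_m) (i : 'I_m) : nth 0 (wd s) i = nat_of_ord (s i).
Proof. by rewrite /wd (nth_map 0) ?size_iota // nth_iota // fsE. Qed.

Lemma wd_mem m (s : 'S_m) : wd s \in Pm m.
Proof.
rewrite PmP wdE size_map size_enum_ord eqxx map_inj_uniq ?enum_uniq /=.
  by apply/allP => y /mapP[i _ ->].
by move=> i j /val_inj /perm_inj.
Qed.

Lemma wd_inj m (s1 s2 : 'S_m) : wd s1 = wd s2 -> s1 = s2.
Proof. move=> e; apply/permP => i; apply: val_inj; have h := nth_wd s1 i; rewrite e nth_wd in h; exact: (esym h). Qed.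

Lemma wd_surj m d : d \in Pm m -> exists s : 'S_m, wd s = d.
Proof.
rewrite PmP => /and3P[ud /eqP sd /allP ad].
pose g (i : 'I_m) : 'I_m := insubd i (nth 0 d i).
have gv i : val (g i) = nth 0 d i.
  by rewrite /g insubdK //; apply: ad; rewrite mem_nth // sd.
have gi : injective g.
  move=> i j /(congr1 val); rewrite !gv => /eqP; rewrite nth_uniq ?sd // => /eqP; exact: val_inj.
exists (perm gi).
rewrite -[RHS](mkseq_nth 0) sd /wd /mkseq; apply/eq_in_map => x; rewrite mem_iota => /andP[_ xm].
by rewrite /fs insubT /= permE gv.
Qed.

Lemma Der_count m : Der m = count (noF (iota 0 m)) (Pm m).
Proof.
rewrite /Der card_count; apply: (@count_inj _ _ _ _ _ _ (@wd m)); rewrite ?enum_uniq ?Pm_uniq //.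
- by move=> x y _ _ _ _; apply: wd_inj.
- move=> s _ fs; rewrite wd_mem /= /noF -val_enum_ord all_map.
  apply/allP => i _ /=; rewrite /fixd nth_wd.
  by move/forallP: fs => /(_ i); apply: contra => /eqP e; apply/eqP/val_inj.
move=> d dP nd; have [s e] := wd_surj dP; exists s => //; rewrite mem_enum /=.
apply/forallP => i; move: nd; rewrite /noF -val_enum_ord all_map -e => /allP /(_ i).
by rewrite mem_enum /= /fixd nth_wd => /(_ isT); apply: contra => /eqP ->.
Qed.

Lemma adjP x y (w : seq nat) :
  reflect (exists t, [/\ t.+1 < size w, nth 0 w t = x & nth 0 w t.+1 = y]) (adj x y w).
Proof.
apply: (iffP idP).
  elim: w => //= a w IH /orP[/andP[/eqP ax]|/IH [t [h1 h2 h3]]].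
    case: w {IH} => //= b w /eqP[yb]; exists 0; split => //.
  by exists t.+1; split.
case=> t []; elim: w t => //= a w IH [|t] /=.
  by case: w {IH} => //= b w _ -> ->; rewrite !eqxx.
by move=> h1 h2 h3; rewrite (IH t) ?orbT.
Qed.

Definition sh n c v := if c <= v then v - c else v + n - c.
Definition unsh n c y := if y + c < n then y + c else y + c - n.

Lemma size_wd m (s : 'S_m) : size (wd s) = m.
Proof. by rewrite /wd size_map size_iota. Qed.

Lemma nth_wd' m (s : 'S_m) t (h : t < m) : nth 0 (wd s) t = nat_of_ord (s (Ordinal h)).
Proof. by rewrite -nth_wd. Qed.

Lemma arith2 m c a b : a < m.+1 -> b < m.+1 -> c < m.+1 ->
  b = (if a.+1 == m.+1 then 1 else a.+2).-1 -> sh m.+1 c a = m -> b = c.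
Proof. by rewrite /sh; case: ifP; case: ifP => //=; lia. Qed.

Lemma arith3 m c a b : a < m.+1 -> b < m.+1 -> c < m.+1 ->
  b = (if a.+1 == m.+1 then 1 else a.+2).-1 -> sh m.+1 c a < m ->
  sh m.+1 c b = (sh m.+1 c a).+1.
Proof. by rewrite /sh; case: ifP; case: ifP; case: ifP => //=; lia. Qed.

Lemma arith4 m c a : a < m.+1 -> c < m.+1 -> sh m.+1 c a <= m.
Proof. by rewrite /sh; case: ifP; lia. Qed.

Lemma in_D_noS m (s : 'S_m.+1) c : nat_of_ord (s ord0) = c ->
  in_D s = noS (iota 0 m) (map (sh m.+1 c) (wd s)).
Proof.
move=> s0; apply/idP/idP.
- move=> D; apply/allP => x; rewrite mem_iota => /andP[_ xm]; apply/negP => /adjP [t [h1 h2 h3]].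
  rewrite size_map size_wd in h1.
  have tn : t < m.+1 by lia.
  rewrite (nth_map 0) ?size_wd // in h2.
  rewrite (nth_map 0) ?size_wd // in h3.
  move/forallP: D => /(_ (s (Ordinal tn))) /negP; apply.
  apply/existsP; exists (Ordinal tn); rewrite /= h1 eqxx /=.
  apply/existsP; exists (Ordinal h1); rewrite /= eqxx /=; apply/eqP.
  rewrite -(nth_wd' s tn) -(nth_wd' s h1).
  have := ltn_ord (s (Ordinal tn)); have := ltn_ord (s (Ordinal h1)).
  rewrite -(nth_wd' s tn) -(nth_wd' s h1).
  have := ltn_ord (s ord0); rewrite s0.
  move: h2 h3; rewrite /sh.
  move: (nth 0 (wd s) t) (nth 0 (wd s) t.+1) => a b.
  by case: ifP; case: ifP; case: ifP => //=; lia.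
- move=> N; apply/forallP => k; apply/negP.
  case/existsP => t /andP[/andP[tn1 /eqP stk] /existsP[u /andP[/eqP ut /eqP su]]].
  have sk : nat_of_ord k = nat_of_ord (s t) by rewrite stk.
  rewrite sk in su.
  have tn : t < m.+1 by exact: ltn_ord.
  have c0 : c < m.+1 by rewrite -s0.
  pose x := sh m.+1 c (nat_of_ord (s t)).
  have xm : x < m.
    rewrite ltn_neqAle arith4 ?andbT //; apply/eqP => xe.
    have := arith2 (ltn_ord (s t)) (ltn_ord (s u)) c0 su xe.
    rewrite -s0 => /val_inj /perm_inj u0.
    by move: ut; rewrite u0.
  move/allP: N => /(_ x); rewrite mem_iota xm => /(_ isT) /negP; apply.
  apply/adjP; exists t; rewrite size_map size_wd; split => //.
    rewrite (nth_map 0) ?size_wd // (nth_wd' s tn).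
    by have -> : Ordinal tn = t by apply: val_inj.
  rewrite (nth_map 0) ?size_wd // (nth_wd' s tn1).
  have -> : Ordinal tn1 = u by apply: val_inj.
  exact: arith3 (ltn_ord (s t)) (ltn_ord (s u)) c0 su xm.
Qed.

Lemma unsh_sh n c a : a < n -> c < n -> unsh n c (sh n c a) = a.
Proof. by rewrite /sh /unsh; case: ifP; case: ifP; lia. Qed.

Lemma sh_unsh n c a : a < n -> c < n -> sh n c (unsh n c a) = a.
Proof. by rewrite /sh /unsh; case: ifP; case: ifP; lia. Qed.

Lemma unsh_lt n c a : a < n -> c < n -> unsh n c a < n.
Proof. by rewrite /unsh; case: ifP; lia. Qed.

Lemma ex0 m (s : 'S_m.+1) c :
  [exists t : 'I_m.+1, (val t == 0) && (s t == c :> nat)] = (nat_of_ord (s ord0) == c).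
Proof.
apply/existsP/eqP => [[t /andP[/eqP t0 /eqP]]|e].
  by have -> : t = ord0 by apply: val_inj.
by exists ord0; rewrite /= e eqxx.
Qed.

Lemma wd_lt m (s : 'S_m) y : y \in wd s -> y < m.
Proof. by have := wd_mem s; rewrite PmP => /and3P[_ _ /allP]; apply. Qed.

Lemma Dside m c : c < m.+1 ->
  #|[set s : 'S_m.+1 | in_D s & [exists t : 'I_m.+1, (val t == 0) && (s t == c :> nat)]]|
  = count (noS (iota 0 m)) (Wm m).
Proof.
move=> cm; rewrite card_count.
apply: (@count_inj _ _ _ _ _ _ (fun s => map (sh m.+1 c) (wd s))); rewrite ?enum_uniq ?Wm_uniq //.
- move=> s1 s2 _ _ _ _ e; apply: wd_inj.
  have ui : forall s : 'S_m.+1, map (unsh m.+1 c) (map (sh m.+1 c) (wd s)) = wd s.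
    move=> s; rewrite -map_comp -[RHS]map_id; apply/eq_in_map => y /wd_lt yl /=.
    by rewrite unsh_sh.
  by rewrite -(ui s1) e ui.
- move=> s _ /andP[D]; rewrite ex0 => /eqP s0.
  rewrite -(in_D_noS s0) D andbT WmP; apply/and4P; split.
  - rewrite map_inj_in_uniq; first by have := wd_mem s; rewrite PmP => /and3P[].
    move=> y z /wd_lt yl /wd_lt zl e.
    by rewrite -(unsh_sh yl cm) e unsh_sh.
  - by rewrite size_map size_wd.
  - by apply/allP => w /mapP[y /wd_lt yl ->]; have := arith4 yl cm; lia.
  have f0 : fs s 0 = c by rewrite -s0 -(fsE s ord0).
  by rewrite /wd /= f0 /sh leqnn subnn.
move=> u uW nu.
move: (uW); rewrite WmP => /and4P[uu /eqP su /allP au hu].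
have dP : map (unsh m.+1 c) u \in Pm m.+1.
  rewrite PmP; apply/and3P; split.
  - rewrite map_inj_in_uniq // => y z /au yl /au zl e.
    by rewrite -(sh_unsh yl cm) e sh_unsh.
  - by rewrite size_map su.
  by apply/allP => w /mapP[y /au yl ->]; apply: unsh_lt.
have [s e] := wd_surj dP.
have mu : map (sh m.+1 c) (wd s) = u.
  rewrite e -map_comp -[RHS]map_id; apply/eq_in_map => y /au yl /=.
  by rewrite sh_unsh.
have s0 : nat_of_ord (s ord0) = c.
  rewrite -(nth_wd s ord0) e /=.
  case: (u) hu => //= y t /eqP[->].
  by rewrite /unsh add0n cm.
exists s => //; rewrite mem_enum /= ex0 s0 eqxx andbT.
by rewrite (in_D_noS s0) mu.
Qed.

Unset Implicit Arguments.

Theorem corollary4p4 (n : nat) (i : nat) :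
  3 <= n -> 1 <= i <= n ->
  #|[set s : 'S_n | in_D s & [exists t : 'I_n, (val t == 0) && (s t == i.-1 :> nat)]]|
  = Der n.-1.
Proof.
case: n => [|m] // _ /andP[i1 im].
have cm : i.-1 < m.+1 by lia.
rewrite (Dside cm) /= Der_count AB ?iota_uniq //.
by apply/allP => x; rewrite mem_iota.
Qed.
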